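(* For the game ${\rm ab}$: - $\lim_{n\to\infty}P^{\rm ab}_n(p)=0$ if $p<1/64$; - $\lim_{n\to\infty}P^{\rm ab}_n(p)=1$ if $p>15/16$.
   Context: Fix $n\geq1$. Alice and Bob alternately make moves, Alice first, each making $n$ moves; every move is a choice from $\{1,2\}$. The outcome of the game ${\rm ab}_n(p)$ is the pair $(\#\{k:a_k=1\},\#\{k:b_k=1\})$, where $a_1,\dots,a_n$ are Alice's moves and $b_1,\dots,b_n$ are Bob's moves. To each possible outcome a winner is assigned independently: Bob with probability $p$, Alice with probability $1-p$. The players know the assignment and all previous moves. $P^{\rm ab}_n(p)$ is the probability that Bob has a winning strategy, i.e. a rule choosing his moves as a function of previous moves that guarantees a win for him whatever Alice plays. *)

(* Defs.v *)
From HB Require Import structures.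
From mathcomp Require Import all_boot all_order all_algebra.
From mathcomp Require Import all_classical all_reals all_analysis.
Set Implicit Arguments. Unset Strict Implicit. Unset Printing Implicit Defensive.
Import Order.TTheory GRing.Theory Num.Theory.
Local Open Scope ring_scope.

(* A move is a choice from {1,2}; we encode the move 1 as [true] and 2 as [false].
   A history is the sequence of all moves made so far, in order
   a_1, b_1, a_2, b_2, ... *)

Definition bob_strategy := seq bool -> bool.

Fixpoint bob_moves (s : bob_strategy) (hist : seq bool) (as_ : seq bool) : seq bool :=
  match as_ with
  | [::] => [::]
  | x :: as' =>
      let h := rcons hist x in
      let y := s h in
      y :: bob_moves s (rcons h y) as'
  end.

Definition ab_outcome (n : nat) (as_ bs : seq bool) : 'I_n.+1 * 'I_n.+1 :=
  (inord (count id as_), inord (count id bs)).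

Definition bob_has_winning_strategy (n : nat) (W : {set 'I_n.+1 * 'I_n.+1}) : Prop :=
  exists s : bob_strategy,
    forall a : n.-tuple bool, ab_outcome n a (bob_moves s [::] a) \in W.

(* P^ab_n(p): each outcome is independently assigned to Bob with probability p,
   so the assignment W has probability p^|W| (1-p)^(#outcomes - |W|). *)
Definition P_ab {R : realType} (n : nat) (p : R) : R :=
  \sum_(W : {set 'I_n.+1 * 'I_n.+1})
     (if pselect (bob_has_winning_strategy W)
      then p ^+ #|W| * (1 - p) ^+ #|~: W| else 0).

(* Main.v *)
Require Import Defs.
From HB Require Import structures.
From mathcomp Require Import all_boot all_order all_algebra.
From mathcomp Require Import all_classical all_reals all_analysis.
Import Order.TTheory GRing.Theory Num.Theory numFieldNormedType.Exports.


From mathcomp Require Import ring lra zify.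
Definition inW {n : nat} (W : {set 'I_n.+1 * 'I_n.+1}) (x y : nat) : bool :=
  (inord x, inord y) \in W.

Fixpoint bw {n : nat} (W : {set 'I_n.+1 * 'I_n.+1}) (r x y : nat) : bool :=
  if r is r'.+1 then
    (bw W r' x y || bw W r' x y.+1) && (bw W r' x.+1 y || bw W r' x.+1 y.+1)
  else inW W x y.

Lemma size_bob_moves s h a : size (bob_moves s h a) = size a.
Proof. by elim: a h => [|x a IH] h //=; rewrite IH. Qed.

Lemma strat_bw n (W : {set 'I_n.+1 * 'I_n.+1}) s :
  forall r h i j,
  (forall a : seq bool, size a = r ->
     inW W (i + count id a) (j + count id (bob_moves s h a))) ->
  bw W r i j.
Proof.
elim=> [|r IH] h i j H /=.
  by have := H [::] erefl; rewrite /= !addn0.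
have step : forall x : bool, bw W r (i + x) j || bw W r (i + x) j.+1.
  move=> x; set y := s (rcons h x).
  have Hb : bw W r (i + x) (j + y).
    apply: (IH (rcons (rcons h x) y)) => a Ha.
    have := H (x :: a); rewrite /= Ha => /(_ erefl).
    by rewrite -/y !addnA.
  by move: Hb; case: (y); rewrite ?addn1 ?addn0 => ->; rewrite ?orbT.
have := step true; have := step false; rewrite addn0 addn1 => -> ->.
by [].
Qed.

Fixpoint pc (h : seq bool) : nat * nat :=
  if h is x :: t then (x + (pc t).2, (pc t).1)%N else (0, 0)%N.

Lemma pc_rcons h x : pc (rcons h x) =
  if odd (size h) then ((pc h).1, (pc h).2 + x)%N else ((pc h).1 + x, (pc h).2)%N.
Proof.
elim: h => [|y t IH] /=; first by rewrite addn0.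
rewrite IH; case: (odd (size t)) => /=; by rewrite ?addnA.
Qed.

Definition bstrat {n} (W : {set 'I_n.+1 * 'I_n.+1}) : bob_strategy :=
  fun h => ~~ bw W (n - (size h)./2.+1) (pc h).1 (pc h).2.

Lemma bw_strat n (W : {set 'I_n.+1 * 'I_n.+1}) :
  forall a h i j k, size h = k.*2 -> pc h = (i, j) -> (k + size a = n)%N ->
  bw W (size a) i j ->
  inW W (i + count id a) (j + count id (bob_moves (bstrat W) h a)).
Proof.
elim=> [|x a IH] h i j k Hs Hp Hk /=; first by rewrite !addn0.
move=> /andP[H0 H1].
set h' := rcons h x.
have Hp' : pc h' = (i + x, j)%N by rewrite /h' pc_rcons Hs odd_double Hp.
have Hs' : size h' = k.*2.+1 by rewrite /h' size_rcons Hs.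
have Hsa : (n - (size h')./2.+1 = size a)%N.
  rewrite Hs' -[k.*2.+1]/(true + k.*2)%N half_bit_double -Hk.
  by rewrite -addSnnS addKn.
set y := bstrat W h'.
have Hy : bw W (size a) (i + x) (j + y).
  rewrite /y /bstrat Hsa Hp' /=.
  have : bw W (size a) (i + x) j || bw W (size a) (i + x) j.+1.
    by case: (x) H0 H1; rewrite ?addn0 ?addn1.
  case E: (bw W (size a) (i + x) j) => /= Hor; first by rewrite addn0.
  by rewrite addn1.
have := IH (rcons h' y) (i + x) (j + y) k.+1.
rewrite size_rcons Hs' doubleS pc_rcons Hs' /= odd_double Hp' /= => /(_ erefl erefl).
rewrite addSnnS => /(_ Hk Hy).
by rewrite -/y !addnA.
Qed.

Lemma bw_win n (W : {set 'I_n.+1 * 'I_n.+1}) :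
  bw W n 0 0 -> bob_has_winning_strategy W.
Proof.
move=> H; exists (bstrat W) => a.
have := @bw_strat n W a [::] 0 0 0 erefl erefl.
rewrite size_tuple add0n => /(_ erefl H).
by rewrite !add0n.
Qed.

Lemma win_bw n (W : {set 'I_n.+1 * 'I_n.+1}) :
  bob_has_winning_strategy W -> bw W n 0 0.
Proof.
case=> s Hs; apply: (@strat_bw n W s n [::] 0 0) => a Ha.
have := Hs (Tuple (introT eqP Ha)).
by rewrite /ab_outcome !add0n.
Qed.
Definition split_prop (g : nat -> nat -> nat -> bool) : Prop :=
  forall r c j, g r c j -> forall s a, s <= r -> a <= s ->
    exists y, j <= y <= j + s /\ g (r - s) (c + a) y.

Definition base_prop {T : finType} (kap : nat -> nat -> T)
  (g : nat -> nat -> nat -> bool) (Z : {set T}) : Prop :=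
  forall c j, g 0 c j -> kap c j \in Z.

Definition cert_ok {T : finType} (kap : nat -> nat -> T) (col : T -> nat)
  (r c j : nat) (F : seq {set T}) : Prop :=
  (forall C, C \in F -> forall z, z \in C -> c <= col z <= c + r) /\
  (forall g Z, split_prop g -> base_prop kap g Z -> g r c j ->
     exists C, C \in F /\ C \subset Z).

Definition base_fam {T : finType} (kap : nat -> nat -> T) (r c j : nat) :=
  [seq [set kap (c + k) (j + f k) | k : 'I_r.+1] | f : {ffun 'I_r.+1 -> 'I_r.+1} <- enum {ffun 'I_r.+1 -> 'I_r.+1}].

Lemma base_ok (T : finType) (n : nat) (kap : nat -> nat -> T) (col : T -> nat) r c j :
  (forall x y, x <= n -> col (kap x y) = x) -> c + r <= n ->
  cert_ok kap col r c j (base_fam kap r c j).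
Proof.
move=> hcol hr; split.
  move=> C /mapP [f _ ->] z /imsetP [k _ ->].
  rewrite hcol; have := ltn_ord k; lia.
move=> g Z Hs Hb Hg.
have Hk : forall k : 'I_r.+1, exists y : 'I_r.+1, kap (c + k) (j + y) \in Z.
  move=> k; have [y [/andP [y1 y2] Hy]] := Hs _ _ _ Hg r k (leqnn r) (ltn_ord k).
  rewrite subnn in Hy.
  have yr : y - j < r.+1 by lia.
  by exists (Ordinal yr); rewrite /= subnKC //; apply: Hb.
pose f := [ffun k : 'I_r.+1 => odflt ord0 [pick y : 'I_r.+1 | kap (c + k) (j + y) \in Z]].
exists [set kap (c + k) (j + f k) | k : 'I_r.+1]; split.
  by apply: map_f; rewrite mem_enum.
apply/fintype.subsetP => z /imsetP [k _ ->]; rewrite /f ffunE.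
case: pickP => [y //|H0].
by have [y Hy] := Hk k; move: (H0 y); rewrite Hy.
Qed.

Lemma base_sum (R : realType) (T : finType) (n : nat) (kap : nat -> nat -> T)
  (col : T -> nat) r c j (q : R) :
  (forall x y, x <= n -> col (kap x y) = x) -> c + r <= n ->
  (\sum_(C <- base_fam kap r c j) q ^+ #|C| = (r.+1 ^ r.+1)%N%:R * q ^+ r.+1)%R.
Proof.
move=> hcol hr; rewrite big_map big_enum /=.
rewrite (eq_bigr (fun _ => (q ^+ r.+1)%R)) ?sumr_const ?card_ffun ?card_ord ?mulr_natl //.
move=> f _; rewrite card_imset ?card_ord //.
move=> k1 k2 /(congr1 col); rewrite !hcol; last 2 first.
- by have := ltn_ord k2; lia.
- by have := ltn_ord k1; lia.
by move/addnI/ord_inj.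
Qed.
Lemma base_bnd (R : realType) (q : R) r : (0 <= q <= 1/16)%R -> 2 <= r <= 6 ->
  ((4 * (r + 3) ^ 2)%N%:R * ((r.+1 ^ r.+1)%N%:R * q ^+ r.+1) <= 995/1000)%R.
Proof.
move=> /andP [q0 q1] hr.
have hq : (q ^+ r.+1 <= (1/16) ^+ r.+1)%R.
  by apply: lerXn2r; rewrite ?nnegrE //; lra.
rewrite !natrM !natrX natrD.
apply: (@le_trans _ _ ((4%:R * (r%:R + 3%:R) ^+ 2 * ((r.+1)%:R ^+ r.+1 * (1/16) ^+ r.+1)))%R).
  apply: ler_wpM2l; first by rewrite mulr_ge0 // exprn_ge0 // addr_ge0.
  by apply: ler_wpM2l; first by rewrite exprn_ge0.
case: r hr hq => [|[|[|[|[|[|[|r]]]]]]] //= _ _; rewrite !exprS !expr0; lra.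
Qed.

Definition bnd {R : realType} {T : finType} (q : R) (r : nat) (F : seq {set T}) : Prop :=
  forall m, (m == 0) || (7 * 2 ^ m <= r.+1) ->
   ((4 * (r + 3) ^ 2)%N%:R * \sum_(C <- F) q ^+ #|C| <= (995/1000) ^+ (2 ^ m))%R.

Lemma natfact r t : t = (r - 1) %/ 2 -> 7 <= r ->
  (4 * (r + 3) ^ 2) * (r - t).+1 ^ 2 <= (4 * (t + 3) ^ 2) ^ 2.
Proof.
move=> ht hr.
have h1 : (r + 3) * (r - t).+1 <= 2 * (t + 3) ^ 2 by nia.
have h2 := leq_mul h1 h1.
rewrite -!mulnn in h2 *; nia.
Qed.

Lemma real_step (R : realType) (N K Rr S1 S2 Th : R) :
  (0 <= S1)%R -> (0 <= S2)%R -> (0 <= Th)%R -> (0 < Rr)%R -> (0 <= N)%R -> (0 <= K)%R ->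
  (N * Rr ^+ 2 <= K ^+ 2)%R -> (K * S1 <= Rr * Th)%R -> (K * S2 <= Rr * Th)%R ->
  (N * (S1 * S2) <= Th ^+ 2)%R.
Proof.
move=> s1 s2 th rr n0 k0 hN a1 a2.
have h : (K ^+ 2 * (S1 * S2) <= Rr ^+ 2 * Th ^+ 2)%R.
  have := ler_pM (mulr_ge0 k0 s1) (mulr_ge0 k0 s2) a1 a2.
  have -> : (K ^+ 2 * (S1 * S2) = (K * S1) * (K * S2))%R by ring.
  by have -> : (Rr ^+ 2 * Th ^+ 2 = (Rr * Th) * (Rr * Th))%R by ring.
have h' : (N * Rr ^+ 2 * (S1 * S2) <= Rr ^+ 2 * Th ^+ 2)%R.
  apply: (le_trans _ h); have := ler_wpM2r (mulr_ge0 s1 s2) hN; exact.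
rewrite -(@ler_pM2l _ (Rr ^+ 2)); last exact: exprn_gt0.
by have -> : (Rr ^+ 2 * (N * (S1 * S2)) = N * Rr ^+ 2 * (S1 * S2))%R by ring.
Qed.

Lemma th_ge0 (R : realType) m : (0 <= (995/1000 : R) ^+ (2 ^ m.-1))%R.
Proof. apply: exprn_ge0; lra. Qed.

Lemma th_sq (R : realType) m :
  (((995/1000 : R) ^+ (2 ^ m.-1)) ^+ 2 <= (995/1000) ^+ (2 ^ m))%R.
Proof.
rewrite -exprM; case: m => [|m].
  by rewrite expn0 mul1n expr1 expr2; lra.
by rewrite /= -expnSr.
Qed.

Lemma cert_main (R : realType) (T : finType) (n : nat) (kap : nat -> nat -> T)
  (col : T -> nat) (q : R) :
  (forall x y, x <= n -> col (kap x y) = x) -> (0 <= q <= 1/16)%R ->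
  forall r c j, 2 <= r -> c + r <= n -> j + r <= n ->
  exists F, cert_ok kap col r c j F /\ bnd q r F.
Proof.
move=> hcol hq; elim/ltn_ind => r IH c j hr hc hj.
case: (leqP r 6) => r6.
  exists (base_fam kap r c j); split; first exact: base_ok hcol hc.
  case=> [|m] hm; last first.
    move: hm; rewrite /= expnS; have := expn_gt0 2 m; lia.
  rewrite (@base_sum R T n kap col r c j q hcol hc) expn0 expr1.
  by apply: base_bnd => //; rewrite hr r6.
set t := (r - 1) %/ 2.
have t3 : 3 <= t by rewrite /t; lia.
have tr : t < r by rewrite /t; lia.
have t2r : t + t.+1 <= r by rewrite /t; lia.
have E1 : forall c', c' + t <= n -> forall y, exists F, y + t <= n ->
    cert_ok kap col t c' y F /\ bnd q t F.
  move=> c' hc' y; case: (leqP (y + t) n) => hy; last by exists [::].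
  have [|F HF] := IH t tr c' y _ hc' hy; first by lia.
  by exists F.
have [f1 Hf1] := choice (E1 c ltac:(lia)).
have [f2 Hf2] := choice (E1 (c + t.+1) ltac:(lia)).
set I := index_iota j (j + (r - t).+1).
have hI : forall y, y \in I -> y + t <= n by move=> y; rewrite mem_index_iota; lia.
set L1 := flatten [seq f1 y | y <- I].
set L2 := flatten [seq f2 y | y <- I].
have L1col : forall C, C \in L1 -> forall z, z \in C -> c <= col z <= c + t.
  move=> C /flatten_mapP [y yI CF] z zC.
  by have [[Hc _] _] := Hf1 y (hI y yI); exact: Hc C CF z zC.
have L2col : forall C, C \in L2 -> forall z, z \in C -> c + t.+1 <= col z <= c + t.+1 + t.
  move=> C /flatten_mapP [y yI CF] z zC.
  by have [[Hc _] _] := Hf2 y (hI y yI); exact: Hc C CF z zC.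
exists [seq C1 :|: C2 | C1 <- L1, C2 <- L2]; split; first split.
- move=> C /allpairsP [[C1 C2] [/= C1L C2L ->]] z; rewrite finset.in_setU => /orP [] zC.
    by have := L1col _ C1L z zC; lia.
  by have := L2col _ C2L z zC; lia.
- move=> g Z Hs Hb Hg.
  have [y1 [hy1 g1]] := Hs _ _ _ Hg (r - t) 0 (leq_subr t r) (leq0n _).
  rewrite subKn ?addn0 in g1; last exact: ltnW.
  have [y2 [hy2 g2]] := Hs _ _ _ Hg (r - t) t.+1 (leq_subr t r) ltac:(lia).
  rewrite subKn in g2; last exact: ltnW.
  have y1I : y1 \in I by rewrite mem_index_iota; lia.
  have y2I : y2 \in I by rewrite mem_index_iota; lia.
  have [[_ W1] _] := Hf1 y1 (hI y1 y1I).
  have [[_ W2] _] := Hf2 y2 (hI y2 y2I).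
  have [C1 [C1F C1Z]] := W1 g Z Hs Hb g1.
  have [C2 [C2F C2Z]] := W2 g Z Hs Hb g2.
  exists (C1 :|: C2); split; last by rewrite finset.subUset C1Z C2Z.
  by apply: allpairs_f; apply/flatten_mapP; [exists y1 | exists y2].
move=> m hm.
have key : forall C1 C2, C1 \in L1 -> C2 \in L2 -> #|C1 :|: C2| = #|C1| + #|C2|.
  move=> C1 C2 h1 h2; rewrite cardsU.
  suff -> : C1 :&: C2 = finset.set0 by rewrite cards0 subn0.
  apply/finset.setP => z; rewrite !inE; apply/negP => /andP [z1 z2].
  by have := L1col _ h1 z z1; have := L2col _ h2 z z2; lia.
set S1 := (\sum_(C <- L1) q ^+ #|C|)%R.
set S2 := (\sum_(C <- L2) q ^+ #|C|)%R.
have -> : (\sum_(C <- [seq C1 :|: C2 | C1 <- L1, C2 <- L2]) q ^+ #|C| = S1 * S2)%R.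
  rewrite big_allpairs_dep /S1 big_distrl /=; apply: eq_big_seq => C1 h1.
  rewrite /S2 big_distrr /=; apply: eq_big_seq => C2 h2.
  by rewrite key // exprD.
have hm' : (m.-1 == 0) || (7 * 2 ^ m.-1 <= t.+1).
  case: m hm => [|m] //= hm; apply/orP; right.
  rewrite expnS in hm; rewrite /t; lia.
set Th := ((995 / 1000) ^+ (2 ^ m.-1) : R)%R.
have q0 : (0 <= q)%R by case/andP: hq.
have B1 : ((4 * (t + 3) ^ 2)%N%:R * S1 <= (r - t).+1%:R * Th)%R.
  rewrite /S1 /L1 big_flatten big_map /= mulr_sumr.
  apply: (@le_trans _ _ (\sum_(y <- I) Th)%R).
    rewrite big_seq [X in (_ <= X)%R]big_seq; apply: ler_sum => y yI.
    by have [_ hb] := Hf1 y (hI y yI); apply: hb.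
  by rewrite /I sumr_const_nat addKn mulr_natl.
have B2 : ((4 * (t + 3) ^ 2)%N%:R * S2 <= (r - t).+1%:R * Th)%R.
  rewrite /S2 /L2 big_flatten big_map /= mulr_sumr.
  apply: (@le_trans _ _ (\sum_(y <- I) Th)%R).
    rewrite big_seq [X in (_ <= X)%R]big_seq; apply: ler_sum => y yI.
    by have [_ hb] := Hf2 y (hI y yI); apply: hb.
  by rewrite /I sumr_const_nat addKn mulr_natl.
apply: (le_trans (@real_step R _ _ _ S1 S2 Th _ _ _ _ _ _ _ B1 B2)).
- by rewrite /S1 sumr_ge0 // => C _; rewrite exprn_ge0.
- by rewrite /S2 sumr_ge0 // => C _; rewrite exprn_ge0.
- exact: th_ge0.
- by rewrite ltr0n.
- exact: ler0n.
- exact: ler0n.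
- rewrite -!natrX -natrM ler_nat; apply: natfact; [exact: erefl | exact: r6].
exact: th_sq.
Qed.

Lemma bob_split (n : nat) (W : {set 'I_n.+1 * 'I_n.+1}) : split_prop (bw W).
Proof.
move=> r c j H s; elim: s r c j H => [|s IH] r c j H a hs ha.
  move: ha; rewrite leqn0 => /eqP ->; exists j; rewrite subn0 !addn0 leqnn.
  by split.
case: r H hs => [|r] //= /andP [H0 H1] hs.
case: a ha => [|a] ha.
  case/orP: H0 => H0.
    have [y [hy Hy]] := IH r c j H0 0 hs (leq0n _).
    by exists y; split; [lia | rewrite subSS].
  have [y [hy Hy]] := IH r c j.+1 H0 0 hs (leq0n _).
  by exists y; split; [lia | rewrite subSS].
case/orP: H1 => H1.
  have [y [hy Hy]] := IH r c.+1 j H1 a hs ha.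
  by exists y; split; [lia | rewrite subSS addnS -addSn].
have [y [hy Hy]] := IH r c.+1 j.+1 H1 a hs ha.
by exists y; split; [lia | rewrite subSS addnS -addSn].
Qed.

Lemma alice_split (n : nat) (W : {set 'I_n.+1 * 'I_n.+1}) :
  split_prop (fun r c j => ~~ bw W r j c).
Proof.
move=> r c j H s; elim: s r c j H => [|s IH] r c j H a hs ha.
  move: ha; rewrite leqn0 => /eqP ->; exists j; rewrite subn0 !addn0 leqnn.
  by split.
case: r H hs => [|r] //= H hs.
rewrite negb_and !negb_or in H.
case/orP: H => /andP [H0 H1].
  case: a ha => [|a] ha.
    have [y [hy Hy]] := IH r c j H0 0 hs (leq0n _).
    by exists y; split; [lia | rewrite subSS].
  have [y [hy Hy]] := IH r c.+1 j H1 a hs ha.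
  by exists y; split; [lia | rewrite subSS addnS -addSn].
case: a ha => [|a] ha.
  have [y [hy Hy]] := IH r c j.+1 H0 0 hs (leq0n _).
  by exists y; split; [lia | rewrite subSS].
have [y [hy Hy]] := IH r c.+1 j.+1 H1 a hs ha.
by exists y; split; [lia | rewrite subSS addnS -addSn].
Qed.

Local Open Scope ring_scope.
Definition mu {R : realType} {T : finType} (q : R) (W : {set T}) : R :=
  q ^+ #|W| * (1 - q) ^+ #|~: W|.

Lemma mu_ge0 (R : realType) (T : finType) (q : R) (W : {set T}) :
  0 <= q <= 1 -> 0 <= mu q W.
Proof. by case/andP=> h0 h1; rewrite /mu mulr_ge0 // exprn_ge0 // subr_ge0. Qed.

Lemma prod_mu (R : realType) (T : finType) (q : R) (W : {set T}) :
  \prod_i (if i \in W then q else 1 - q) = mu q W.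
Proof.
rewrite (bigID (mem W)) /=; congr (_ * _).
  by rewrite -prodr_const; apply: eq_big => i // ->.
rewrite -prodr_const; apply: eq_big => i; first by rewrite inE.
by move/negbTE ->.
Qed.

Lemma sum_sub (R : realType) (T : finType) (q : R) (C : {set T}) :
  \sum_(W : {set T}) (if C \subset W then mu q W else 0) = q ^+ #|C|.
Proof.
have := @bigA_distr R 0 1 *%R +%R T (fun _ => q) (fun i => if i \in C then 0 else 1 - q).
have -> : \prod_i (q + (if i \in C then 0 else 1 - q)) = q ^+ #|C|.
  rewrite -prodr_const (bigID (mem C)) /= [X in _ * X]big1 ?mulr1.
    by apply: eq_bigr => i ->; rewrite addr0.
  by move=> i /negbTE ->; rewrite addrC subrK.
move=> ->; apply: eq_bigr => W _.
case: ifP => HC.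
  rewrite -prod_mu; apply: eq_bigr => i _.
  case: ifP => // iW; case: ifP => // iC.
  by move/fintype.subsetP: HC => /(_ i iC); rewrite iW.
case/fintype.subsetPn: (negbT HC) => i iC iW.
by rewrite (bigD1 i) //= (negbTE iW) iC mul0r.
Qed.

Lemma sum_subC (R : realType) (T : finType) (q : R) (C : {set T}) :
  \sum_(W : {set T}) (if C \subset ~: W then mu q W else 0) = (1 - q) ^+ #|C|.
Proof.
rewrite (reindex_inj (@finset.setC_inj T)) /= -(@sum_sub R T (1 - q) C).
apply: eq_bigr => W _; rewrite finset.setCK; case: ifP => // _.
by rewrite /mu finset.setCK mulrC; congr (_ * _); rewrite opprB addrCA subrr addr0.
Qed.

Lemma sum_mu (R : realType) (T : finType) (q : R) :
  \sum_(W : {set T}) mu q W = 1.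
Proof.
rewrite -(expr0 q) -(@cards0 T) -sum_sub; apply: eq_bigr => W _.
by rewrite finset.sub0set.
Qed.

Lemma sum_ge_mem (R : realType) (I : eqType) (s : seq I) (f : I -> R) x0 :
  (forall x, 0 <= f x) -> x0 \in s -> f x0 <= \sum_(x <- s) f x.
Proof.
move=> f0; elim: s => [|y s IH] //; rewrite big_cons in_cons.
case/orP=> [/eqP ->|/IH h].
  by rewrite lerDl sumr_ge0.
by rewrite (le_trans h) // lerDr.
Qed.

Lemma ub (R : realType) (T : finType) (q : R) (E : {set T} -> bool)
  (S : {set T} -> {set T}) (F : seq {set T}) :
  0 <= q <= 1 ->
  (forall W, E W -> exists C, C \in F /\ C \subset S W) ->
  \sum_(W : {set T}) (if E W then mu q W else 0) <=
  \sum_(C <- F) \sum_(W : {set T}) (if C \subset S W then mu q W else 0).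
Proof.
move=> hq H; rewrite exchange_big /=; apply: ler_sum => W _.
case: ifP => EW; last by apply: sumr_ge0 => C _; case: ifP => // _; exact: mu_ge0.
have [C [CF CS]] := H W EW.
apply: le_trans (@sum_ge_mem R _ F (fun C => if C \subset S W then mu q W else 0) C _ CF).
  by rewrite CS.
by move=> D; case: ifP => // _; exact: mu_ge0.
Qed.

Local Open Scope classical_set_scope.

Lemma cvg_dbl (R : realType) (u : nat -> R) (y th : R) :
  0 <= th -> th < 1 ->
  (forall m n, (7 * 2 ^ m <= n.+1)%N -> (2 <= n)%N -> `|y - u n| <= th ^+ (2 ^ m)) ->
  u n @[n --> \oo] --> y.
Proof.
move=> th0 th1 H; apply/cvgrPdist_lt => e e0.
have := @cvg_expr R th; rewrite ger0_norm // => /(_ th1).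
move/cvgr0Pnorm_lt => /(_ e e0) [N _ HN].
exists (7 * 2 ^ N.+1)%N => // n /= Hn.
have h2 := expn_gt0 2 N; rewrite expnS in Hn.
apply: (le_lt_trans (H N n _ _)); try lia.
have := HN (2 ^ N)%N; rewrite /= ger0_norm ?exprn_ge0 //; apply.
by rewrite /= ltnW // ltn_expl.
Qed.

Lemma P_ab_ge0 (R : realType) n (p : R) : 0 <= p <= 1 -> 0 <= P_ab n p.
Proof.
move=> hp; apply: sumr_ge0 => W _; case: pselect => h //.
exact: (@mu_ge0 R _ p W hp).
Qed.

Lemma P_ab_le1 (R : realType) n (p : R) : 0 <= p <= 1 -> P_ab n p <= 1.
Proof.
move=> hp; rewrite -(@sum_mu R ('I_n.+1 * 'I_n.+1)%type p).
apply: ler_sum => W _; case: pselect => h //.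
exact: (@mu_ge0 R _ p W hp).
Qed.

Lemma part1_bnd (R : realType) (p : R) n m : 0 <= p -> p <= 1/16 -> (2 <= n)%N ->
  (7 * 2 ^ m <= n.+1)%N -> P_ab n p <= (995/1000) ^+ (2 ^ m).
Proof.
move=> p0 p1 hn hm.
pose kap := fun x y : nat => ((inord x, inord y) : 'I_n.+1 * 'I_n.+1).
pose col := fun z : 'I_n.+1 * 'I_n.+1 => nat_of_ord z.1.
have hcol : forall x y, (x <= n)%N -> col (kap x y) = x.
  by move=> x y hx; rewrite /col /kap /= inordK.
have hq : 0 <= p <= 1/16 by rewrite p0 p1.
have hq1 : 0 <= p <= 1 by rewrite p0 /=; apply: le_trans p1 _; lra.
have [F [[_ HF] HB]] := @cert_main R _ n kap col p hcol hq n 0 0 hn (leqnn _) (leqnn _).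
apply: (@le_trans _ _ (\sum_(W : {set 'I_n.+1 * 'I_n.+1}) (if bw W n 0 0 then mu p W else 0))).
  apply: ler_sum => W _; case: pselect => h.
    by rewrite (@win_bw n W h).
  by case: ifP => _ //; apply: mu_ge0.
apply: le_trans (@ub R _ p (fun W => bw W n 0 0) id F hq1 _) _.
  move=> W HW; apply: (HF (bw W) W (@bob_split n W) _ HW).
  by move=> c j.
under eq_bigr do rewrite sum_sub.
apply: le_trans (HB m _); last by rewrite hm orbT.
apply: ler_peMl; first by apply: sumr_ge0 => C _; rewrite exprn_ge0.
by rewrite ler1n muln_gt0 expn_gt0 addn_gt0 orbT.
Qed.

Lemma part2_bnd (R : realType) (p : R) n m : 15/16 <= p -> p <= 1 -> (2 <= n)%N ->
  (7 * 2 ^ m <= n.+1)%N -> 1 - P_ab n p <= (995/1000) ^+ (2 ^ m).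
Proof.
move=> p0 p1 hn hm.
pose kap := fun x y : nat => ((inord y, inord x) : 'I_n.+1 * 'I_n.+1).
pose col := fun z : 'I_n.+1 * 'I_n.+1 => nat_of_ord z.2.
have hcol : forall x y, (x <= n)%N -> col (kap x y) = x.
  by move=> x y hx; rewrite /col /kap /= inordK.
have hq : 0 <= 1 - p <= 1/16 by apply/andP; split; lra.
have hq1 : 0 <= p <= 1 by apply/andP; split; lra.
have [F [[_ HF] HB]] := @cert_main R _ n kap col (1 - p) hcol hq n 0 0 hn (leqnn _) (leqnn _).
apply: (@le_trans _ _ (\sum_(W : {set 'I_n.+1 * 'I_n.+1}) (if ~~ bw W n 0 0 then mu p W else 0))).
  rewrite -(@sum_mu R ('I_n.+1 * 'I_n.+1)%type p) /P_ab -sumrB.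
  apply: ler_sum => W _; case: pselect => h.
    by rewrite /mu subrr; case: ifP => _ //; apply: mu_ge0.
  have -> : ~~ bw W n 0 0 by apply/negP => /(@bw_win n W).
  by rewrite subr0.
apply: le_trans (@ub R _ p (fun W => ~~ bw W n 0 0) (@finset.setC _) F hq1 _) _.
  move=> W HW; apply: (HF (fun r c j => ~~ bw W r j c) (~: W) (@alice_split n W) _ HW).
  by move=> c j h; rewrite finset.in_setC.
under eq_bigr do rewrite sum_subC.
apply: le_trans (HB m _); last by rewrite hm orbT.
apply: ler_peMl; first by apply: sumr_ge0 => C _; rewrite exprn_ge0 //; lra.
by rewrite ler1n muln_gt0 expn_gt0 addn_gt0 orbT.
Qed.

Theorem proposition4 (R : realType) :
  (forall p : R, 0 <= p -> p < 1 / 64 -> P_ab n p @[n --> \oo] --> (0 : R)) /\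
  (forall p : R, 15 / 16 < p -> p <= 1 -> P_ab n p @[n --> \oo] --> (1 : R)).
Proof.
split.
  move=> p p0 p1; apply: (@cvg_dbl R _ 0 (995/1000)); [lra | lra |].
  move=> m n hm hn; rewrite sub0r normrN ger0_norm.
    by apply: part1_bnd => //; lra.
  by apply: P_ab_ge0; apply/andP; split; lra.
move=> p p0 p1; apply: (@cvg_dbl R _ 1 (995/1000)); [lra | lra |].
move=> m n hm hn; rewrite ger0_norm.
  by apply: part2_bnd => //; lra.
by rewrite subr_ge0; apply: P_ab_le1; apply/andP; split; lra.
Qed.
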